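(* Let $n\ge1$, $N=\{1,\dots,n\}$, $A=[0,1]$, and let $f$ be an OWA mechanism. If $f$ satisfies proportionality (P) (equivalently, PF, or UFS) then $f$ satisfies individual fair share (IFS); and if $f$ satisfies IFS then $f$ satisfies unanimity (UN).
   Context: A mechanism is a map $f:A^n\to A$ from profiles $x=(x_i)_{i\in N}$ of reported locations to a facility location. An OWA mechanism has weights $w_1,\dots,w_n\in[0,1]$ with $\sum_j w_j=1$ and returns $f(x)=\sum_{j=1}^n w_j x_{\pi(j)}$, where $\pi$ is a permutation of $N$ with $x_{\pi(1)}\le\dots\le x_{\pi(n)}$. P: for every $x\in\{0,1\}^n$, $f(x)=\#\{i: x_i=1\}/n$. PF: for every $x$, nonempty $S\subseteq N$, $i\in S$: $|x_i-f(x)|\le 1-\frac{|S|}{n}+\max_{j\in S}x_j-\min_{j\in S}x_j$. UFS: for every $x$, every nonempty $S\subseteq N$ whose members all report the same location, and $i\in S$: $|x_i-f(x)|\le 1-\frac{|S|}{n}$. IFS: for every $x$ and $i\in N$, $|x_i-f(x)|\le1-\frac1n$. UN: whenever $x_i=c$ for all $i\in N$, $f(x)=c$. *)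

(* Defs.v *)
From HB Require Import structures.
From mathcomp Require Import all_boot all_order all_algebra.
From mathcomp Require Import reals.
Set Implicit Arguments. Unset Strict Implicit. Unset Printing Implicit Defensive.
Import Order.TTheory GRing.Theory Num.Theory.
Local Open Scope ring_scope.

Section Owa.
Variables (R : realType) (n : nat).

Definition in_A (a : R) : Prop := 0 <= a <= 1.
Definition profile (x : 'I_n -> R) : Prop := forall i, in_A (x i).

Definition owa_weights (w : 'I_n -> R) : Prop :=
  (forall j, 0 <= w j <= 1) /\ \sum_(j < n) w j = 1.

Definition sorted_reports (x : 'I_n -> R) : seq R :=
  sort <=%R [seq x i | i <- enum 'I_n].

Definition owa (w : 'I_n -> R) (x : 'I_n -> R) : R :=
  \sum_(j < n) w j * nth 0 (sorted_reports x) j.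

Definition Proportionality (f : ('I_n -> R) -> R) : Prop :=
  forall x : 'I_n -> R, (forall i, x i = 0 \/ x i = 1) ->
    f x = #|[set i | x i == 1]|%:R / n%:R.

Definition ProportionalFairness (f : ('I_n -> R) -> R) : Prop :=
  forall x : 'I_n -> R, profile x ->
  forall (S : {set 'I_n}) (i : 'I_n), i \in S ->
    `|x i - f x| <= 1 - #|S|%:R / n%:R
        + (\big[Num.max/x i]_(j in S) x j - \big[Num.min/x i]_(j in S) x j).

Definition UnanimousFairShare (f : ('I_n -> R) -> R) : Prop :=
  forall x : 'I_n -> R, profile x ->
  forall (S : {set 'I_n}), (forall j k, j \in S -> k \in S -> x j = x k) ->
  forall i, i \in S -> `|x i - f x| <= 1 - #|S|%:R / n%:R.

Definition IndividualFairShare (f : ('I_n -> R) -> R) : Prop :=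
  forall x : 'I_n -> R, profile x ->
  forall i, `|x i - f x| <= 1 - 1 / n%:R.

Definition Unanimity (f : ('I_n -> R) -> R) : Prop :=
  forall (x : 'I_n -> R) (c : R), in_A c -> (forall i, x i = c) -> f x = c.

End Owa.

(* Main.v *)
Require Import Defs.
From HB Require Import structures.
From mathcomp Require Import all_boot all_order all_algebra.
From mathcomp Require Import reals.
From mathcomp Require Import ring lra.
Import Order.TTheory GRing.Theory Num.Theory.
Local Open Scope ring_scope.

Lemma count_enum_card (n : nat) (P : pred 'I_n) : count P (enum 'I_n) = #|P|.
Proof. by rewrite enumT cardE /enum_mem size_filter. Qed.

Lemma sr01 {R : realType} {n : nat} (x : 'I_n -> R) :
  (forall i, x i = 0 \/ x i = 1) ->
  sorted_reports x = nseq (n - #|[set i | x i == 1]|) 0 ++ nseq #|[set i | x i == 1]| 1.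
Proof.
move=> H01; set k := #|_|.
apply: (sorted_eq le_trans le_anti); first by apply: sort_sorted; exact: le_total.
  rewrite (sorted_pairwise le_trans) pairwise_cat; apply/and3P; split.
  - by apply/allrelP => a b /nseqP [-> _] /nseqP [-> _]; rewrite ler01.
  - by elim: (n - k)%N => //= m ->; rewrite andbT; apply/allP => a /nseqP [-> _].
  - by elim: k => //= m ->; rewrite andbT; apply/allP => a /nseqP [-> _].
rewrite /sorted_reports perm_sort.
rewrite -(perm_filterC (pred1 1)) perm_catC perm_cat //.
- have -> : [seq y <- [seq x i | i <- enum 'I_n] | predC (pred1 1) y] = nseq (n - k) 0.
    set s := filter _ _.
    have -> : (n - k)%N = size s.
      rewrite size_filter count_map.
      have h := count_predC (preim x (pred1 1)) (enum 'I_n).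
      rewrite size_enum_ord in h.
      have hk : count (preim x (pred1 1)) (enum 'I_n) = k.
        by rewrite count_enum_card /k; apply: eq_card => i; rewrite inE.
      by rewrite -[in LHS]h -hk addKn; apply: eq_count.
    apply/all_pred1P/allP => a; rewrite mem_filter => /andP [/= Ha /mapP [i _ Hai]].
    by move: Ha; rewrite Hai; case: (H01 i) => ->; rewrite /= ?eqxx.
  by [].
- set s := [seq y <- _ | _].
  have -> : k = size s.
    rewrite size_filter count_map count_enum_card /k.
    by apply: eq_card => i; rewrite inE.
  suff /all_pred1P <- : all (pred1 1) s by [].
  by apply/allP => a; rewrite mem_filter => /andP [/= /eqP -> _].
Qed.

Lemma sr_size {R : realType} {n : nat} (x : 'I_n -> R) : size (sorted_reports x) = n.
Proof. by rewrite /sorted_reports size_sort size_map size_enum_ord. Qed.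

Lemma sr_mem {R : realType} {n : nat} (x : 'I_n -> R) a :
  a \in sorted_reports x -> exists i, a = x i.
Proof. by rewrite /sorted_reports mem_sort => /mapP [i _ ->]; exists i. Qed.

Lemma sr_in {R : realType} {n : nat} (x : 'I_n -> R) i : x i \in sorted_reports x.
Proof. by rewrite /sorted_reports mem_sort; apply: map_f; rewrite mem_enum. Qed.

Lemma sr_sorted {R : realType} {n : nat} (x : 'I_n -> R) : sorted <=%R (sorted_reports x).
Proof. by apply: sort_sorted; exact: le_total. Qed.

Lemma sr_nth01 {R : realType} {n : nat} (x : 'I_n -> R) j :
  profile x -> (j < n)%N -> 0 <= nth 0 (sorted_reports x) j <= 1.
Proof.
move=> px jn; have /sr_mem [i ->] : nth 0 (sorted_reports x) j \in sorted_reports x.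
  by apply: mem_nth; rewrite sr_size.
exact: px.
Qed.

Lemma sr_bounds {R : realType} {m : nat} (x : 'I_m.+1 -> R) i :
  nth 0 (sorted_reports x) 0 <= x i <= nth 0 (sorted_reports x) m.
Proof.
have hin := sr_in x i.
rewrite -(nth_index 0 hin).
have hi : (index (x i) (sorted_reports x) < m.+1)%N by rewrite -[in X in (_ < X)%N](sr_size x) index_mem.
apply/andP; split; apply: (sorted_leq_nth le_trans lexx 0 (sr_sorted x));
  rewrite ?inE ?sr_size //; by rewrite -ltnS.
Qed.

Lemma ifs_of_w (R : realType) (m : nat) (w : 'I_m.+1 -> R) :
  owa_weights w -> 1 / m.+1%:R <= w ord0 -> 1 / m.+1%:R <= w ord_max ->
  IndividualFairShare (owa w).
Proof.
move=> [w01 wsum] h0 hm x px i.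
set c := 1 / m.+1%:R in h0 hm *.
have [hs0 hsi] := andP (sr_bounds x i).
have [s0a s0b] := andP (sr_nth01 x 0%N px (ltn0Sn m)).
have [sma smb] := andP (sr_nth01 x m px (ltnSn m)).
have [w0a w0b] := andP (w01 ord0).
have [wma wmb] := andP (w01 ord_max).
set s := sorted_reports x in hs0 hsi s0a s0b sma smb *.
have lo : w ord_max * nth 0 s m <= owa w x.
  rewrite /owa big_ord_recr /= lerDr; apply: sumr_ge0 => j _.
  have [a _] := andP (w01 (widen_ord (leqnSn m) j)).
  have [b _] := andP (sr_nth01 x j px (ltn_trans (ltn_ord j) (ltnSn m))).
  exact: mulr_ge0.
have hi : owa w x <= w ord0 * nth 0 s 0 + (1 - w ord0).
  rewrite /owa big_ord_recl /= lerD2l.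
  have -> : 1 - w ord0 = \sum_(j < m) w (lift ord0 j).
    by rewrite -wsum big_ord_recl /= addrC addKr.
  apply: ler_sum => j _.
  have [a _] := andP (w01 (lift ord0 j)).
  have [_ b] := andP (sr_nth01 x (lift ord0 j) px (ltn_ord (lift ord0 j))).
  by rewrite -[leRHS]mulr1 ler_wpM2l.
have p1 : 0 <= (1 - w ord_max) * (1 - nth 0 s m) by apply: mulr_ge0; lra.
have p2 : 0 <= nth 0 s 0 * (1 - w ord0) by apply: mulr_ge0; lra.
rewrite ler_norml; apply/andP; split; nra.
Qed.

Theorem mainTheorem7 (R : realType) (n : nat) (w : 'I_n -> R) :
  (0 < n)%N -> owa_weights w ->
  (Proportionality (owa w) -> IndividualFairShare (owa w)) /\
  (ProportionalFairness (owa w) -> IndividualFairShare (owa w)) /\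
  (UnanimousFairShare (owa w) -> IndividualFairShare (owa w)) /\
  (IndividualFairShare (owa w) -> Unanimity (owa w)).
Proof.
move=> n0 hw; split; last split; last split.
- case: n w n0 hw => // m w _ hw hP; apply: ifs_of_w => //.
  + pose e0 : 'I_m.+1 -> R := fun i => if i == ord0 then 0 else 1.
    have h01 : forall i, e0 i = 0 \/ e0 i = 1 by move=> i; rewrite /e0; case: (i == ord0); [left|right].
    have hc : #|[set i | e0 i == 1]| = m.
      rewrite -[m]/(m.+1.-1) -[in RHS](card_ord m.+1) -(cardsC1 (@ord0 m)); apply: eq_card => i.
      rewrite !inE /e0; case: (i == ord0) => /=; by rewrite ?eqxx // eq_sym oner_eq0.
    have := hP e0 h01; rewrite /owa sr01 // hc subSnn big_ord_recl /= mulr0 add0r.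
    under eq_bigr => j _ do rewrite nth_nseq ltn_ord mulr1.
    have := hw.2; rewrite big_ord_recl => hs.
    have hs' : \sum_(i < m) w (lift ord0 i) = 1 - w ord0 by rewrite -hs addrC addKr.
    rewrite hs' => he.
    have key : 1 / m.+1%:R = 1 - m%:R / m.+1%:R :> R.
      by field; rewrite addrC natr1 pnatr_eq0.
    by rewrite key -he opprB addrCA subrr addr0.
  + pose e1 : 'I_m.+1 -> R := fun i => if i == ord_max then 1 else 0.
    have h01 : forall i, e1 i = 0 \/ e1 i = 1 by move=> i; rewrite /e1; case: (i == ord_max); [right|left].
    have hc : #|[set i | e1 i == 1]| = 1%N.
      rewrite -(cards1 (@ord_max m)); apply: eq_card => i.
      rewrite !inE /e1; case: (i == ord_max) => /=; by rewrite ?eqxx // eq_sym oner_eq0.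
    have := hP e1 h01; rewrite /owa sr01 // hc subn1 /= big_ord_recr /=.
    under eq_bigr => j _ do rewrite nth_cat size_nseq /= ltn_ord nth_nseq ltn_ord mulr0.
    rewrite big1_eq add0r nth_cat size_nseq ltnn subnn /= mulr1 => ->.
    by [].
- move=> hPF x px i; have := hPF x px [set i] i (set11 i).
  have hp : forall j, (j \in [set i]) = (j == i) by move=> j; rewrite inE.
  rewrite -!big_enum enum_set1 !big_cons !big_nil.
  by rewrite /= maxxx minxx cards1 subrr addr0.
- move=> hU x px i; have := hU x px [set i] _ i (set11 i); rewrite cards1; apply.
  by move=> j k; rewrite !inE => /eqP -> /eqP ->.
- move=> _ x c _ hx; rewrite /owa.
  have hn : forall j : 'I_n, nth 0 (sorted_reports x) j = c.
    move=> j; have /sr_mem [i ->] : nth 0 (sorted_reports x) j \in sorted_reports x.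
      by apply: mem_nth; rewrite sr_size.
    exact: hx.
  under eq_bigr => j _ do rewrite hn.
  by rewrite -mulr_suml hw.2 mul1r.
Qed.
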